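(* Suppose there is a function $f:\mathbb{N}\to\mathbb{R}$ with $\lim_{n\to\infty} f(n)=\infty$ such that for every $n$, every instance with $n$ agents (with monotone valuations) and exactly $m=n+\lfloor f(n)\rfloor$ goods admits an EFX allocation. Then for every $n$ and $m$, every instance with $n$ agents (with monotone valuations) and $m$ goods admits an EFX allocation. *)

(* Defs.v *)
From mathcomp Require Import all_boot all_order all_algebra.
From mathcomp Require Import reals.
Set Implicit Arguments. Unset Strict Implicit. Unset Printing Implicit Defensive.
Import Order.TTheory GRing.Theory Num.Theory.
Local Open Scope ring_scope.

Definition monotone_val (R : realType) (m : nat) (v : {set 'I_m} -> R) : Prop :=
  forall S T : {set 'I_m}, S \subset T -> v S <= v T.

Definition is_allocation (n m : nat) (X : 'I_n -> {set 'I_m}) : Prop :=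
  (forall i j : 'I_n, i != j -> [disjoint X i & X j]) /\
  (forall g : 'I_m, exists i : 'I_n, g \in X i).

Definition is_EFX (R : realType) (n m : nat) (v : 'I_n -> {set 'I_m} -> R)
  (X : 'I_n -> {set 'I_m}) : Prop :=
  forall (i j : 'I_n) (g : 'I_m), g \in X j -> v i (X j :\ g) <= v i (X i).

Definition EFX_exists (R : realType) (n m : nat) (v : 'I_n -> {set 'I_m} -> R) : Prop :=
  exists X : 'I_n -> {set 'I_m}, is_allocation X /\ is_EFX v X.

Definition EFX_always (R : realType) (n m : nat) : Prop :=
  forall v : 'I_n -> {set 'I_m} -> R,
    (forall i, monotone_val (v i)) -> EFX_exists v.

(* Main.v *)
Require Import Defs.
From mathcomp Require Import all_boot all_order all_algebra reals lra.
Import Order.TTheory GRing.Theory Num.Theory.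
Local Open Scope ring_scope.

Lemma drop_goods (R : realType) (n m m' : nat) (h : (m <= m')%N) :
  EFX_always R n m' -> EFX_always R n m.
Proof.
move=> H v vm.
pose w := widen_ord h.
have winj : injective w by move=> a b /(congr1 val) /= /val_inj.
pose pre (S : {set 'I_m'}) := [set g | w g \in S].
have preS : forall S T : {set 'I_m'}, S \subset T -> pre S \subset pre T.
  by move=> S T /subsetP sST; apply/subsetP => g; rewrite !inE => /sST.
have [X [[Xd Xc] Xe]] := H (fun i S => v i (pre S)) (fun i S T hST => vm i _ _ (preS _ _ hST)).
exists (fun i => pre (X i)); split; [split|].
- move=> i j /Xd dij; rewrite -setI_eq0; apply/eqP/setP => g; rewrite !inE.
  apply/negP => /andP[a b]; move: dij; rewrite -setI_eq0 => /eqP/setP/(_ (w g)).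
  by rewrite !inE a b.
- by move=> g; have [i hi] := Xc (w g); exists i; rewrite inE.
- move=> i j g; rewrite inE => gX.
  have -> : pre (X j) :\ g = pre (X j :\ w g).
    by apply/setP => x; rewrite !inE (inj_eq winj).
  exact: Xe gX.
Qed.
Lemma drop_agent (R : realType) (n m : nat) (hn : (0 < n)%N) :
  EFX_always R n.+1 m.+1 -> EFX_always R n m.
Proof.
move=> H v vm.
pose w := widen_ord (leqnSn m).
have winj : injective w by move=> x y /(congr1 val) /= /val_inj.
pose gs : 'I_m.+1 := ord_max.
have wgs : forall g, w g != gs.
  by move=> g; apply/eqP => /(congr1 val) /= e; move: (ltn_ord g); rewrite e ltnn.
pose pre (S : {set 'I_m.+1}) := [set g | w g \in S].
have preS : forall S T : {set 'I_m.+1}, S \subset T -> pre S \subset pre T.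
  by move=> S T /subsetP sST; apply/subsetP => g; rewrite !inE => /sST.
pose i0 : 'I_n := Ordinal hn.
pose C := v i0 setT - v i0 set0 + 1.
have Cpos : 0 < C.
  have := vm i0 set0 setT (sub0set _); rewrite /C; lra.
pose L (i : 'I_n) : 'I_n.+1 := lift ord_max i.
pose tw (a : 'I_n.+1) := if unlift ord_max a is Some i then i else i0.
have twL : forall i, tw (L i) = i by move=> i; rewrite /tw /L liftK.
have twM : tw ord_max = i0 by rewrite /tw unlift_none.
pose V (a : 'I_n.+1) (S : {set 'I_m.+1}) :=
  v (tw a) (pre S) + (if (tw a == i0) && (gs \in S) then C else 0).
have Vmono : forall a, monotone_val (V a).
  move=> a S T hST; rewrite /V; apply: lerD; first exact/vm/preS.
  case: (tw a == i0) => //=; case: ifP => hS.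
    by rewrite (subsetP hST _ hS).
  by case: ifP => _; [apply: ltW|].
have Vge : forall a S, v (tw a) (pre S) <= V a S.
  move=> a S; rewrite /V lerDl; case: ifP => // _; exact: ltW.
have [X [[Xd Xc] Xe]] := H V Vmono.
have [a ha] := Xc gs.
have Xn : forall b, b != a -> gs \notin X b.
  move=> b /Xd; rewrite -setI_eq0 => /eqP/setP/(_ gs); rewrite !inE ha andbT.
  by move=> ->.
have Vb : forall b, b != a -> V b (X b) = v (tw b) (pre (X b)).
  by move=> b /Xn hb; rewrite /V (negbTE hb) andbF addr0.
have hXa : X a = [set gs].
  apply/setP => g; rewrite inE; apply/idP/eqP; last by move->.
  move=> ga; apply/eqP; apply: contraT => ggs.
  pose t := if a == ord_max then L i0 else ord_max.
  have tna : t != a.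
    rewrite /t; case: (eqVneq a ord_max) => [->|ham]; first by rewrite eq_sym neq_lift.
    by rewrite eq_sym.
  have twt : tw t = i0 by rewrite /t; case: ifP => _; [exact: twL|exact: twM].
  have := Xe t a g ga; rewrite (Vb _ tna) /V twt eqxx /= !inE.
  rewrite ha andbT eq_sym ggs.
  have := vm i0 _ _ (sub0set (pre (X a :\ g))).
  have := vm i0 _ _ (subsetT (pre (X t))).
  rewrite /C; lra.
pose sg (i : 'I_n) := if L i == a then ord_max else L i.
have sgn : forall i, sg i != a.
  move=> i; rewrite /sg; case: (eqVneq (L i) a) => // <-; by rewrite /L neq_lift.
have sginj : injective sg.
  move=> i j; rewrite /sg; case: eqP => [hi|_]; case: eqP => [hj|_].
  - by move=> _; apply: (@lift_inj _ ord_max); exact: (etrans hi (esym hj)).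
  - by move=> /eqP; rewrite /L (negbTE (neq_lift _ _)).
  - by move=> /eqP; rewrite /L eq_sym (negbTE (neq_lift _ _)).
  - exact: lift_inj.
exists (fun i => pre (X (sg i))); split; [split|].
- move=> i j ij; have /Xd dij : sg i != sg j by apply: contra ij => /eqP/sginj ->.
  rewrite -setI_eq0; apply/eqP/setP => g; rewrite !inE.
  apply/negP => /andP[p q]; move: dij; rewrite -setI_eq0 => /eqP/setP/(_ (w g)).
  by rewrite !inE p q.
- move=> g; have [b hb] := Xc (w g).
  have bna : b != a by apply: contraTneq hb => ->; rewrite hXa inE (negbTE (wgs g)).
  case: (unliftP ord_max b) => [j eb|eb].
    by exists j; rewrite inE /sg /L -eb (negbTE bna).
  case: (unliftP ord_max a) => [j0 ea|ea]; last by move: bna; rewrite ea eb eqxx.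
  by exists j0; rewrite inE /sg /L -ea eqxx -eb.
- move=> i j g; rewrite inE => gX.
  have -> : pre (X (sg j)) :\ g = pre (X (sg j) :\ w g).
    by apply/setP => x; rewrite !inE (inj_eq winj).
  case: (eqVneq (tw (sg i)) i) => htw.
    have := Xe (sg i) (sg j) (w g) gX; rewrite (Vb _ (sgn i)) htw.
    by apply: le_trans; rewrite -{1}htw; apply: Vge.
  have eLa : L i = a.
    by apply/eqP; apply: contraNT htw; rewrite /sg => /negbTE ->; rewrite twL.
  have hsi : sg i = ord_max by rewrite /sg eLa eqxx.
  have ii0 : i != i0 by move: htw; rewrite hsi twM eq_sym.
  have := Xe a (sg j) (w g) gX.
  rewrite /V -eLa twL (negbTE ii0) /= !addr0 eLa hXa hsi => h.
  apply: (le_trans h); apply: vm; apply/subsetP => x; rewrite !inE.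
  by rewrite (negbTE (wgs x)).
Qed.

Lemma drop_many (R : realType) (n m d : nat) (hn : (0 < n)%N) :
  EFX_always R (n + d) (m + d) -> EFX_always R n m.
Proof.
elim: d => [|d IH]; first by rewrite !addn0.
rewrite !addnS => H; apply: IH; apply: drop_agent H.
by rewrite ltn_addr.
Qed.

Theorem theorem2 (R : realType) (f : nat -> R)
  (hf : forall M : R, exists N : nat, forall n : nat, (N <= n)%N -> M <= f n)
  (hEFX : forall n m : nat, (0 < n)%N ->
            (m%:Z = n%:Z + Num.floor (f n))%R -> EFX_always R n m) :
  forall n m : nat, (0 < n)%N -> EFX_always R n m.
Proof.
move=> n m hn.
have [N hN] := hf (m%:R).
pose n' := maxn n N.
have hfn : m%:R <= f n' by apply: hN; rewrite leq_maxr.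
have hfl : (m%:Z <= Num.floor (f n'))%R by rewrite floor_ge_int.
have fl0 : (0 <= Num.floor (f n'))%R by apply: le_trans hfl.
pose k := `|Num.floor (f n')|%N.
have ek : (k%:Z = Num.floor (f n'))%R by rewrite /k gez0_abs.
have hmk : (m <= k)%N by rewrite -lez_nat ek.
have hn' : (0 < n')%N by apply: leq_trans hn (leq_maxl _ _).
have H1 : EFX_always R n' (n' + k) by apply: hEFX => //; rewrite -ek PoszD.
have nn' : (n <= n')%N by rewrite leq_maxl.
apply: (@drop_many R n m (n' - n) hn).
rewrite subnKC //.
apply: (@drop_goods R n' _ (n' + k) _ H1).
by rewrite addnC; apply: leq_add; [exact: leq_subr|exact: hmk].
Qed.
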